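(* Let $X$, $Y$ be real Banach spaces, $\Omega$ a measure space, $Z:=L^2(\Omega)$, and $e:Y\to Z$ a linear continuous dense embedding. Let $f:X\to\mathbb{R}$ and $g:X\to Y$ be continuously Fréchet differentiable. Let $x\in X$ be a feasible point ($g(x)\le 0$) satisfying the AKKT conditions, with sequences $x^k\to x$ in $X$ and $(\lambda^k)\subset K_Y^+$ such that $f'(x^k)+g'(x^k)^*\lambda^k\to 0$ and $\langle\lambda^k,g_-(x^k)\rangle\to 0$. Then: (a) if the Zowe–Kurcyusz condition $g'(x)X+\operatorname{cone}(K_Y+g(x))=Y$ holds at $x$, then $(\lambda^k)$ is bounded in $Y^*$; (b) if moreover the map $y\mapsto|y|$ is well-defined and continuous on $Y$, the closed unit ball of $Y^*$ is weak-$*$ sequentially compact, and $(\lambda^k)$ is bounded in $Y^*$, then $x$ is a KKT point, i.e. there exists $\lambda\in K_Y^+$ with $f'(x)+g'(x)^*\lambda=0$, $g(x)\le 0$ and $\langle\lambda,g(x)\rangle=0$.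
   Context: The order on $Y$ is induced by $Z$: $K_Y:=\{y\in Y: e(y)\ge 0 \text{ a.e.}\}$, and $y\le 0$ means $-y\in K_Y$. $K_Y^+:=\{\mu\in Y^*:\langle\mu,y\rangle\ge 0\ \forall y\in K_Y\}$, with $\langle\cdot,\cdot\rangle$ the duality pairing of $Y^*$ and $Y$. For $y\in Y$, $|y|$, $y_+=\max\{y,0\}$, $y_-=\max\{-y,0\}$ are defined via the pointwise operations in $Z$ (the statement ''well-defined on $Y$'' means these land in $Y$); $g_-(x):=(g(x))_-$. $\operatorname{cone}(A)$ denotes the conical hull $\{t a: t\ge 0, a\in A\}$ of $A\subseteq Y$. *)

(* Defs.v *)
From HB Require Import structures.
From mathcomp Require Import all_boot all_order all_algebra.
From mathcomp Require Import all_classical all_reals all_analysis.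
Set Implicit Arguments. Unset Strict Implicit. Unset Printing Implicit Defensive.
Import Order.TTheory GRing.Theory Num.Theory.
Import numFieldNormedType.Exports.
Local Open Scope classical_set_scope.
Local Open Scope ring_scope.

(* continuously Frechet differentiable: differentiable everywhere and the
   derivative x |-> f'(x) is continuous for the operator norm *)
Definition C1_map {R : realType} {U V : normedModType R} (f : U -> V) :=
  (forall x, differentiable f x) /\
  (forall (x : U) (eps : R), 0 < eps -> exists2 del : R, 0 < del &
     forall x' : U, `|x' - x| < del ->
       forall h : U, `|'d f x' h - 'd f x h| <= eps * `|h|).

Definition is_dual {R : realType} {Y : normedModType R} (m : Y -> R) :=
  (forall (a : R) (y z : Y), m (a *: y + z) = a * m y + m z) /\ continuous m.

(* h is (a representative of) an element of L^2(mu) *)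
Definition L2_elem {R : realType} {d} {T : measurableType d}
  (mu : {measure set T -> \bar R}) (h : T -> R) :=
  measurable_fun setT h /\ (Lnorm mu 2%:E (EFin \o h) < +oo)%E.

Definition dense_L2_embedding {R : realType} {Y : normedModType R} {d}
  {T : measurableType d} (mu : {measure set T -> \bar R}) (e : Y -> T -> R) :=
  [/\ (forall y, L2_elem mu (e y)),
      (forall (a : R) (y z : Y), e (a *: y + z) = (fun t => a * e y t + e z t)),
      (exists C : R, forall y, (Lnorm mu 2%:E (EFin \o e y) <= (C * `|y|)%:E)%E),
      (forall y, {ae mu, forall t, e y t = 0} -> y = 0) &
      (forall h, L2_elem mu h -> forall eps : R, 0 < eps ->
         exists y, (Lnorm mu 2%:E (EFin \o (fun t => (e y t - h t)%R)) < eps%:E)%E)].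

Definition KY {R : realType} {Y : normedModType R} {d} {T : measurableType d}
  (mu : {measure set T -> \bar R}) (e : Y -> T -> R) : set Y :=
  [set y | {ae mu, forall t, 0 <= e y t}].

Definition KYplus {R : realType} {Y : normedModType R} {d} {T : measurableType d}
  (mu : {measure set T -> \bar R}) (e : Y -> T -> R) : set (Y -> R) :=
  [set m | is_dual m /\ forall y, KY mu e y -> 0 <= m y].

Definition is_negpart {R : realType} {Y : normedModType R} {d} {T : measurableType d}
  (mu : {measure set T -> \bar R}) (e : Y -> T -> R) (y w : Y) :=
  {ae mu, forall t, e w t = Num.max (- e y t) 0}.

Definition is_abs {R : realType} {Y : normedModType R} {d} {T : measurableType d}
  (mu : {measure set T -> \bar R}) (e : Y -> T -> R) (y w : Y) :=
  {ae mu, forall t, e w t = `|e y t|}.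

Definition dual_ball_wstar_seq_compact {R : realType} (Y : normedModType R) :=
  forall ms : nat -> Y -> R, (forall n, is_dual (ms n)) ->
    (forall n y, `|ms n y| <= `|y|) ->
    exists phi : nat -> nat, (forall n, (phi n < phi n.+1)%N) /\
      exists m0 : Y -> R, [/\ is_dual m0, (forall y, `|m0 y| <= `|y|) &
        forall y, (fun n => ms (phi n) y) @ \oo --> m0 y].

Definition dual_bounded {R : realType} {Y : normedModType R} (lam : nat -> Y -> R) :=
  exists M : R, forall k y, `|lam k y| <= M * `|y|.

(* Main.v *)
Require Import Defs.
From HB Require Import structures.
From mathcomp Require Import all_boot all_order all_algebra.
From mathcomp Require Import all_classical all_reals all_analysis.
From mathcomp Require Import ring lra.
Set Implicit Arguments. Unset Strict Implicit. Unset Printing Implicit Defensive.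
Import Order.TTheory GRing.Theory Num.Theory.
Import numFieldNormedType.Exports.
Local Open Scope classical_set_scope.
Local Open Scope ring_scope.

Lemma dualD (R : realType) (Y : normedModType R) (m : Y -> R) :
  is_dual m -> forall y z, m (y + z) = m y + m z.
Proof. by move=> [hl _] y z; have := hl 1 y z; rewrite scale1r mul1r. Qed.

Lemma dual0 (R : realType) (Y : normedModType R) (m : Y -> R) :
  is_dual m -> m 0 = 0.
Proof. move=> hm; have := dualD hm 0 0; rewrite addr0; lra. Qed.

Lemma dualZ (R : realType) (Y : normedModType R) (m : Y -> R) :
  is_dual m -> forall a y, m (a *: y) = a * m y.
Proof. by move=> hm a y; have := hm.1 a y 0; rewrite addr0 (dual0 hm) addr0. Qed.

Lemma dualN (R : realType) (Y : normedModType R) (m : Y -> R) :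
  is_dual m -> forall y, m (- y) = - m y.
Proof. by move=> hm y; rewrite -scaleN1r (dualZ hm) mulN1r. Qed.

Lemma dualB (R : realType) (Y : normedModType R) (m : Y -> R) :
  is_dual m -> forall y z, m (y - z) = m y - m z.
Proof. by move=> hm y z; rewrite (dualD hm) (dualN hm). Qed.

Lemma dual_scale (R : realType) (Y : normedModType R) (m : Y -> R) (c : R) :
  is_dual m -> is_dual (fun y => c * m y).
Proof.
move=> hm; split.
  by move=> a y z /=; rewrite hm.1; ring.
move=> y; apply: cvgM; [exact: cvg_cst | exact: hm.2].
Qed.

Lemma dual_linear (R : realType) (Y : normedModType R) (m : Y -> R) :
  is_dual m -> linear m.
Proof. by move=> hm a u v; rewrite hm.1. Qed.

Lemma lin_bound (R : realType) (V W : normedModType R) (L : {linear V -> W}) :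
  continuous L -> exists2 c, 0 < c & forall y, `|L y| <= c * `|y|.
Proof.
move=> cL; have /linear_boundedP := continuous_linear_bounded 0 (cL 0).
by move/pinfty_ex_gt0.
Qed.

Lemma dual_bound (R : realType) (Y : normedModType R) (m : Y -> R) :
  is_dual m -> exists2 c, 0 < c & forall y, `|m y| <= c * `|y|.
Proof.
move=> hm.
pose L : {linear Y -> R} := HB.pack m (GRing.isLinear.Build _ _ _ _ m (dual_linear hm)).
exact: (@lin_bound R Y R L hm.2).
Qed.

Lemma dual_unit_bound (R : realType) (Y : normedModType R) (m : Y -> R) (C : R) :
  is_dual m -> (forall y, `|y| <= 1 -> `|m y| <= C) -> forall y, `|m y| <= C * `|y|.
Proof.
move=> hm hC y.
have [->|y0] := eqVneq y 0.
  have := hC 0; rewrite normr0 ler01 (dual0 hm) normr0 => /(_ isT) C0.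
  by rewrite mulr0.
have ny : 0 < `|y| by rewrite normr_gt0.
have := hC (`|y|^-1 *: y).
rewrite normrZ normfV normr_id mulVf ?gt_eqF // lexx => /(_ isT).
rewrite (dualZ hm) normrM normfV normr_id.
by rewrite ler_pdivrMl // mulrC.
Qed.

Lemma zk_uniform (R : realType) (X Y : completeNormedModType R) (d : measure_display)
  (T : measurableType d) (mu : {measure set T -> \bar R}) (e : Y -> T -> R)
  (A : X -> Y) (gx : Y) :
  (forall y : Y, exists (h : X) (t : R) (q : Y),
       [/\ 0 <= t, KY mu e q & y = A h + t *: (q + gx)]) ->
  exists2 C, 0 < C & forall m : Y -> R, KYplus mu e m -> -1 <= m gx ->
    (forall h, `|m (A h)| <= `|h|) -> forall y, `|m y| <= C * `|y|.
Proof.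
move=> ZK.
pose F := [set m : Y -> R | KYplus mu e m /\ -1 <= m gx /\ forall h, `|m (A h)| <= `|h|].
have H1 : forall m, F m -> bounded_fun_norm m /\ linear m.
  move=> m [[hm _] _]; split; last exact: dual_linear.
  have [c c0 hc] := dual_bound hm.
  move=> r; exists (c * r) => y yr.
  by apply: le_trans (hc y) _; rewrite ler_wpM2l // ltW.
have H2 : pointwise_bounded F.
  move=> y.
  (* bound independent of m: use representations of y and -y *)
  have [h1 [t1 [q1 [t10 Kq1 e1]]]] := ZK y.
  have [h2 [t2 [q2 [t20 Kq2 e2]]]] := ZK (- y).
  exists (`|h1| + t1 + (`|h2| + t2)) => m [[hm Kp] [hg hA]].
  rewrite ler_norml; apply/andP; split.
  + have : -(`|h1| + t1) <= m y.
      rewrite e1 (dualD hm) (dualZ hm) (dualD hm).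
      have := hA h1; rewrite ler_norml => /andP[hh _].
      have := Kp q1 Kq1 => q0.
      nra.
    have : 0 <= `|h2| + t2 by rewrite addr_ge0.
    lra.
  + have : -(`|h2| + t2) <= m (- y).
      rewrite e2 (dualD hm) (dualZ hm) (dualD hm).
      have := hA h2; rewrite ler_norml => /andP[hh _].
      have := Kp q2 Kq2 => q0.
      nra.
    rewrite (dualN hm).
    have : 0 <= `|h1| + t1 by rewrite addr_ge0.
    lra.
have [M HM] := @Banach_Steinhauss R Y R F H1 H2 1.
  exists (`|M| + 1); first by rewrite ltr_pwDr // normr_ge0.
  move=> m Km hg hA y.
  apply: (dual_unit_bound Km.1) => z z1.
  apply: le_trans (HM m (conj Km (conj hg hA)) z z1) _.
  have := ler_norm M; lra.
Qed.

Lemma phi_ge (phi : nat -> nat) : (forall n, (phi n < phi n.+1)%N) -> forall n, (n <= phi n)%N.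
Proof.
move=> hp; elim=> [|n IH] //; exact: leq_ltn_trans IH (hp n).
Qed.

Lemma near_subseq (P : nat -> Prop) (phi : nat -> nat) :
  (forall n, (phi n < phi n.+1)%N) ->
  (\forall k \near \oo, P k) -> \forall n \near \oo, P (phi n).
Proof.
move=> hp [N _ HN]; exists N => // n /= Nn; apply: HN => /=.
exact: leq_trans Nn (phi_ge hp n).
Qed.

Lemma lim_ge (R : realType) (u : nat -> R) (L a : R) :
  u @ \oo --> L -> (\forall n \near \oo, a <= u n) -> a <= L.
Proof.
move=> hu ha; have := limr_ge (cvgP _ hu) ha.
by move=> /(_ eventually_filter); rewrite (cvg_lim _ hu).
Qed.

Lemma lim_le (R : realType) (u : nat -> R) (L a : R) :
  u @ \oo --> L -> (\forall n \near \oo, u n <= a) -> L <= a.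
Proof.
move=> hu ha; have := limr_le (cvgP _ hu) ha.
by move=> /(_ eventually_filter); rewrite (cvg_lim _ hu).
Qed.

Lemma negpart_KY (R : realType) (Y : normedModType R) (d : measure_display)
  (T : measurableType d) (mu : {measure set T -> \bar R}) (e : Y -> T -> R) (y w : Y) :
  dense_L2_embedding mu e -> is_negpart mu e y w -> KY mu e (y + w).
Proof.
move=> [_ lin _ _ _] hw.
rewrite /KY /=; have := lin 1 y w; rewrite scale1r => ->.
apply: filterS hw => t ->.
rewrite mul1r.
have : - e y t <= Num.max (- e y t) 0 by rewrite le_max lexx.
have : 0 <= Num.max (- e y t) 0 by rewrite le_max lexx orbT.
lra.
Qed.

Lemma eventually_bounded (R : realType) (Y : normedModType R) (lam : nat -> Y -> R) (B : R) :
  (forall k, is_dual (lam k)) ->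
  (\forall k \near \oo, forall y, `|lam k y| <= B * `|y|) -> dual_bounded lam.
Proof.
move=> hd [N _ HN].
have fin : forall n, exists M, 0 <= M /\ forall k, (k < n)%N -> forall y, `|lam k y| <= M * `|y|.
  elim=> [|n [M [M0 HM]]]; first by exists 0; split.
  have [c c0 hc] := dual_bound (hd n).
  exists (M + c); split; first by rewrite addr_ge0 // ltW.
  move=> k; rewrite ltnS leq_eqVlt => /orP[/eqP -> | kn] y.
    apply: le_trans (hc y) _; rewrite ler_wpM2r //; lra.
  apply: le_trans (HM k kn y) _; rewrite ler_wpM2r //; have := ltW c0; lra.
have [M [M0 HM]] := fin N.
exists (M + `|B|) => k y.
have ny := normr_ge0 y.
have [kN|Nk] := ltnP k N.
  apply: le_trans (HM k kN y) _; rewrite ler_wpM2r //; have := normr_ge0 B; lra.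
apply: le_trans (HN k Nk y) _; rewrite ler_wpM2r //; have := ler_norm B; lra.
Qed.

Lemma partA (R : realType) (X Y : completeNormedModType R) (d : measure_display)
  (T : measurableType d) (mu : {measure set T -> \bar R})
  (e : Y -> T -> R) (f : X -> R) (g : X -> Y)
  (x : X) (xk : nat -> X) (lam : nat -> Y -> R) (w : nat -> Y) :
  dense_L2_embedding mu e -> C1_map f -> C1_map g -> xk @ \oo --> x ->
  (forall k, KYplus mu e (lam k)) ->
  (forall eps : R, 0 < eps -> \forall k \near \oo,
     forall h : X, `|'d f (xk k) h + lam k ('d g (xk k) h)| <= eps * `|h|) ->
  (forall k, is_negpart mu e (g (xk k)) (w k)) ->
  (fun k => lam k (w k)) @ \oo --> (0 : R) ->
  (forall y : Y, exists (h : X) (t : R) (q : Y),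
       [/\ 0 <= t, KY mu e q & y = 'd g x h + t *: (q + g x)]) ->
  dual_bounded lam.
Proof.
move=> emb [df Cf] [dg Cg] hxk Klam stat neg hw ZK.
have [C C0 HC] := zk_uniform ZK.
have [cf cf0 hcf] := lin_bound (L := 'd f x) (diff_continuous (df x)).
have [df1 df10 Hdf1] := Cf x 1 ltr01.
pose del := (4 * C)^-1.
have del0 : 0 < del by rewrite invr_gt0 mulr_gt0.
have Cdel : C * del = 4^-1.
  by rewrite /del invfM mulrCA mulfV ?gt_eqF // mulr1.
have [dg1 dg10 Hdg1] := Cg x del del0.
have gcont : \forall k \near \oo, `|g (xk k) - g x| <= del.
  have /cvgrPdist_le /(_ del del0) Hn := differentiable_continuous (dg x).
  have H2 : \forall k \near \oo, `|g x - g (xk k)| <= del := hxk _ Hn.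
  by apply: filterS H2 => k; rewrite distrC.
have xcl : forall eps, 0 < eps -> \forall k \near \oo, `|xk k - x| < eps.
  move=> eps eps0; move: hxk => /cvgrPdist_lt /(_ eps eps0).
  by apply: filterS => k; rewrite distrC.
have wcl : \forall k \near \oo, lam k (w k) <= 1.
  move: hw => /cvgrPdist_le /(_ 1 ltr01).
  by apply: filterS => k; rewrite sub0r normrN ler_norml => /andP[].
pose K := C * (1 + (cf + 2)).
apply: (@eventually_bounded _ _ _ (2 * K)).
  by move=> k; exact: (Klam k).1.
near=> k.
have hst : forall h, `|'d f (xk k) h + lam k ('d g (xk k) h)| <= 1 * `|h|.
  by near: k; exact: stat 1 ltr01.
have hx1 : `|xk k - x| < df1 by near: k; exact: xcl.
have hx2 : `|xk k - x| < dg1 by near: k; exact: xcl.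
have hgk : `|g (xk k) - g x| <= del by near: k; exact: gcont.
have hwk : lam k (w k) <= 1 by near: k; exact: wcl.
have hd := (Klam k).1.
pose V := [set N : R | 0 <= N /\ forall y, `|lam k y| <= N * `|y|].
have V0 : V !=set0.
  by have [c c0 hc] := dual_bound hd; exists c; split; [exact: ltW|].
have lbV : lbound V 0 by move=> N [].
have hlb : has_lbound V by exists 0.
set N := inf V.
have N0 : 0 <= N by apply: lb_le_inf.
have HN : forall y, `|lam k y| <= N * `|y|.
  move=> y; have [->|y0] := eqVneq y 0; first by rewrite (dual0 hd) !normr0 mulr0.
  have ny : 0 < `|y| by rewrite normr_gt0.
  rewrite -ler_pdivrMr //.
  apply: lb_le_inf => // M [M0 HM]; rewrite ler_pdivrMr //.
pose D := 1 + (cf + 2) + N * del.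
have D1 : 1 <= D.
  have : 0 <= N * del by rewrite mulr_ge0 // ltW.
  have := ltW cf0; rewrite /D; lra.
have D0 : 0 < D by lra.
pose m := fun y => D^-1 * lam k y.
have hm : KYplus mu e m.
  split; first exact: dual_scale.
  by move=> y Ky; rewrite /m mulr_ge0 ?invr_ge0 ?(ltW D0) // (Klam k).2.
have hgx : -1 <= m (g x).
  have Kp := (Klam k).2 _ (negpart_KY emb (neg k)).
  rewrite (dualD hd) in Kp.
  have := HN (g x - g (xk k)); rewrite (dualB hd) ler_norml => /andP[h1 _].
  have h2 : N * `|g x - g (xk k)| <= N * del by rewrite distrC ler_wpM2l.
  have h3 : 0 <= cf + 2 by have := ltW cf0; lra.
  rewrite /m mulrC ler_pdivlMr //.
  rewrite /D; lra.
have hA : forall h, `|m ('d g x h)| <= `|h|.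
  move=> h; rewrite /m normrM ger0_norm ?invr_ge0 ?(ltW D0) //.
  rewrite mulrC ler_pdivrMr //.
  have e1 : lam k ('d g x h) = lam k ('d g (xk k) h) - lam k ('d g (xk k) h - 'd g x h).
    by rewrite (dualB hd); ring.
  rewrite e1.
  have t1 := hst h.
  have t2 := Hdf1 _ hx1 h.
  have t3 := Hdg1 _ hx2 h.
  have t4 := HN ('d g (xk k) h - 'd g x h).
  have t5 := hcf h.
  have t6 : N * `|'d g (xk k) h - 'd g x h| <= N * (del * `|h|) by rewrite ler_wpM2l.
  have a1 := ler_normD ('d f (xk k) h + lam k ('d g (xk k) h)) (- 'd f (xk k) h).
  rewrite addrC addKr normrN in a1.
  have a2 := ler_normD ('d f (xk k) h - 'd f x h) ('d f x h).
  rewrite subrK in a2.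
  have a3 := ler_normB (lam k ('d g (xk k) h)) (lam k ('d g (xk k) h - 'd g x h)).
  have E : `|h| * D = `|h| + cf * `|h| + 2 * `|h| + N * (del * `|h|) by rewrite /D; ring.
  rewrite E.
  apply: (le_trans a3). have b1 := le_trans a1 (lerD t1 (le_trans a2 (lerD t2 t5))). have b2 := le_trans t4 t6. apply: le_trans (lerD b1 b2) _. rewrite !mul1r. have := normr_ge0 h. lra.
have HCm := HC m hm hgx hA.
have DV : V (C * D).
  split; first by rewrite mulr_ge0 // ltW.
  move=> y; have := HCm y.
  rewrite /m normrM ger0_norm ?invr_ge0 ?(ltW D0) // mulrC ler_pdivrMr //.
  by rewrite mulrAC.
have NCD : N <= C * D := ge_inf hlb DV.
have E : C * D = K + N * (C * del) by rewrite /D /K; ring.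
rewrite Cdel in E.
have K0 : 0 <= K by rewrite /K mulr_ge0 // ?ltW //; have := ltW cf0; lra.
move=> y; apply: le_trans (HN y) _; rewrite ler_wpM2r //; lra.
Unshelve. all: by end_near.
Qed.

Lemma small0 (R : realType) (z c : R) :
  0 <= c -> (forall eps, 0 < eps -> z <= eps * c) -> z <= 0.
Proof.
move=> c0 H; apply/ler_addgt0Pr => e e0; rewrite add0r.
have c1 : 0 < c + 1 by lra.
apply: le_trans (H (e / (c + 1)) (divr_gt0 e0 c1)) _.
rewrite mulrAC ler_pdivrMr // ler_wpM2l ?(ltW e0) //; lra.
Qed.

Lemma partB (R : realType) (X Y : completeNormedModType R) (d : measure_display)
  (T : measurableType d) (mu : {measure set T -> \bar R})
  (e : Y -> T -> R) (f : X -> R) (g : X -> Y)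
  (x : X) (xk : nat -> X) (lam : nat -> Y -> R) (w : nat -> Y) :
  dense_L2_embedding mu e -> C1_map f -> C1_map g -> KY mu e (- g x) ->
  xk @ \oo --> x ->
  (forall k, KYplus mu e (lam k)) ->
  (forall eps : R, 0 < eps -> \forall k \near \oo,
     forall h : X, `|'d f (xk k) h + lam k ('d g (xk k) h)| <= eps * `|h|) ->
  (forall k, is_negpart mu e (g (xk k)) (w k)) ->
  (fun k => lam k (w k)) @ \oo --> (0 : R) ->
  dual_ball_wstar_seq_compact Y ->
  dual_bounded lam ->
  exists2 l : Y -> R, KYplus mu e l &
     [/\ forall h : X, 'd f x h + l ('d g x h) = 0,
         KY mu e (- g x) & l (g x) = 0].
Proof.
move=> emb [df Cf] [dg Cg] Kgx hxk Klam stat neg hw wc [M HM].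
pose M1 := `|M| + 1.
have M10 : 0 < M1 by rewrite /M1 ltr_pwDr // normr_ge0.
have HM1 : forall k y, `|lam k y| <= M1 * `|y|.
  move=> k y; apply: le_trans (HM k y) _; rewrite ler_wpM2r //.
  by have := ler_norm M; rewrite /M1; lra.
pose ms := fun n y => M1^-1 * lam n y.
have [phi [hphi [m0 [hm0 _ hconv]]]] :
    exists phi : nat -> nat, (forall n, (phi n < phi n.+1)%N) /\
      exists m0 : Y -> R, [/\ is_dual m0, (forall y, `|m0 y| <= `|y|) &
        forall y, (fun n => ms (phi n) y) @ \oo --> m0 y].
  apply: wc; first by move=> n; exact: dual_scale (Klam n).1.
  move=> n y; rewrite /ms normrM ger0_norm ?invr_ge0 ?(ltW M10) //.
  by rewrite mulrC ler_pdivrMr // mulrC.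
pose l := fun y => M1 * m0 y.
have hld : is_dual l by exact: dual_scale.
have hl : forall y, (fun n => lam (phi n) y) @ \oo --> l y.
  move=> y.
  have -> : (fun n => lam (phi n) y) = (fun n => M1 * ms (phi n) y).
    by apply: funext => n; rewrite /ms mulrA mulfV ?gt_eqF // mul1r.
  apply: cvgM; [exact: cvg_cst | exact: hconv].
have xcl : forall eps, 0 < eps -> \forall n \near \oo, `|xk (phi n) - x| < eps.
  move=> eps eps0; apply: (near_subseq (P := fun k => `|xk k - x| < eps) hphi).
  move: hxk => /cvgrPdist_lt /(_ eps eps0).
  by apply: filterS => k; rewrite distrC.
have hlK : KYplus mu e l.
  split => // y Ky; apply: (lim_ge (hl y)); apply: nearW => n.
  exact: (Klam _).2.
exists l => //; split => //.
- move=> h.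
  pose L := 'd f x h + l ('d g x h).
  have hu : (fun n => 'd f x h + lam (phi n) ('d g x h)) @ \oo --> L.
    by apply: cvgD; [exact: cvg_cst | exact: hl].
  have key : forall eps, 0 < eps -> `|L| <= eps * ((2 + M1) * `|h|).
    move=> eps eps0.
    have [d1 d10 Hd1] := Cf x eps eps0.
    have [d2 d20 Hd2] := Cg x eps eps0.
    have ev : \forall n \near \oo,
        `|'d f x h + lam (phi n) ('d g x h)| <= eps * ((2 + M1) * `|h|).
      near=> n.
      have s1 : `|'d f (xk (phi n)) h + lam (phi n) ('d g (xk (phi n)) h)| <= eps * `|h|.
        by near: n; apply: (near_subseq (P := fun k => `|'d f (xk k) h + lam k ('d g (xk k) h)| <= eps * `|h|) hphi); by apply: filterS (stat eps eps0) => k; apply.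
      have x1 : `|xk (phi n) - x| < d1 by near: n; exact: xcl.
      have x2 : `|xk (phi n) - x| < d2 by near: n; exact: xcl.
      have s2 := Hd1 _ x1 h.
      have s3 := Hd2 _ x2 h.
      have s4 := HM1 (phi n) ('d g x h - 'd g (xk (phi n)) h).
      rewrite distrC in s3.
      have s5 : M1 * `|'d g x h - 'd g (xk (phi n)) h| <= M1 * (eps * `|h|).
        by rewrite ler_wpM2l // ltW.
      have hd := (Klam (phi n)).1.
      have E : 'd f x h + lam (phi n) ('d g x h) =
        ('d f (xk (phi n)) h + lam (phi n) ('d g (xk (phi n)) h))
        - ('d f (xk (phi n)) h - 'd f x h)
        + lam (phi n) ('d g x h - 'd g (xk (phi n)) h).
        by rewrite (dualB hd); ring.
      rewrite E.
      apply: le_trans (ler_normD _ _) _.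
      apply: le_trans (lerD (ler_normB _ _) (le_trans s4 s5)) _.
      apply: le_trans (lerD (lerD s1 s2) (lexx _)) _.
      have E2 : eps * ((2 + M1) * `|h|) = eps * `|h| + eps * `|h| + M1 * (eps * `|h|) by ring.
      by rewrite E2.
    rewrite ler_norml; apply/andP; split.
    + apply: (lim_ge hu); apply: filterS ev => n; rewrite ler_norml => /andP[].
      by [].
    + apply: (lim_le hu); apply: filterS ev => n; rewrite ler_norml => /andP[].
      by [].
  have hn : `|L| <= 0.
    apply: (small0 (c := (2 + M1) * `|h|)) => //.
    by rewrite mulr_ge0 // ?normr_ge0 //; lra.
  by apply/normr0_eq0/le_anti; rewrite hn normr_ge0.
- apply: le_anti; apply/andP; split.
    have := hlK.2 _ Kgx; rewrite (dualN hld); lra.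
  rewrite -oppr_le0; apply: (small0 (c := 1 + M1)); first lra.
  move=> eps eps0.
  rewrite lerNl.
  apply: (lim_ge (hl (g x))).
  have gcont : \forall n \near \oo, `|g (xk (phi n)) - g x| <= eps.
    apply: (near_subseq (P := fun k => `|g (xk k) - g x| <= eps) hphi).
    have /cvgrPdist_le /(_ eps eps0) Hn := differentiable_continuous (dg x).
    have H2 : \forall k \near \oo, `|g x - g (xk k)| <= eps := hxk _ Hn.
    by apply: filterS H2 => k; rewrite distrC.
  have wcl : \forall n \near \oo, lam (phi n) (w (phi n)) <= eps.
    apply: (near_subseq (P := fun k => lam k (w k) <= eps) hphi).
    move: hw => /cvgrPdist_le /(_ eps eps0).
    by apply: filterS => k; rewrite sub0r normrN ler_norml => /andP[].
  near=> n.
  have g1 : `|g (xk (phi n)) - g x| <= eps by near: n; exact: gcont.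
  have w1 : lam (phi n) (w (phi n)) <= eps by near: n; exact: wcl.
  have hd := (Klam (phi n)).1.
  have Kp := (Klam (phi n)).2 _ (negpart_KY emb (neg (phi n))).
  rewrite (dualD hd) in Kp.
  have := HM1 (phi n) (g x - g (xk (phi n))).
  rewrite (dualB hd) => h1.
  have h2 : M1 * `|g x - g (xk (phi n))| <= M1 * eps by rewrite distrC ler_wpM2l // ltW.
  have h3 := le_trans h1 h2.
  move: h3; rewrite ler_norml => /andP[h3 _].
  have E : - (eps * (1 + M1)) = - eps - M1 * eps by ring.
  rewrite E; lra.
Unshelve. all: by end_near.
Qed.

Theorem theorem5p5 (R : realType) (X Y : completeNormedModType R)
  (d : measure_display) (T : measurableType d) (mu : {measure set T -> \bar R})
  (e : Y -> T -> R) (f : X -> R) (g : X -> Y)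
  (x : X) (xk : nat -> X) (lam : nat -> Y -> R) (w : nat -> Y) :
  dense_L2_embedding mu e ->
  C1_map f -> C1_map g ->
  KY mu e (- g x) ->
  xk @ \oo --> x ->
  (forall k, KYplus mu e (lam k)) ->
  (forall eps : R, 0 < eps -> \forall k \near \oo,
     forall h : X, `|'d f (xk k) h + lam k ('d g (xk k) h)| <= eps * `|h|) ->
  (forall k, is_negpart mu e (g (xk k)) (w k)) ->
  (fun k => lam k (w k)) @ \oo --> (0 : R) ->
  ((forall y : Y, exists (h : X) (t : R) (q : Y),
       [/\ 0 <= t, KY mu e q & y = 'd g x h + t *: (q + g x)]) ->
     dual_bounded lam)
  /\
  ((exists2 ab : Y -> Y, (forall y, is_abs mu e y (ab y)) & continuous ab) ->
   dual_ball_wstar_seq_compact Y ->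
   dual_bounded lam ->
   exists2 l : Y -> R, KYplus mu e l &
     [/\ forall h : X, 'd f x h + l ('d g x h) = 0,
         KY mu e (- g x) & l (g x) = 0]).
Proof.
move=> emb Cf Cg Kgx hxk Klam stat neg hw; split.
  exact: partA emb Cf Cg hxk Klam stat neg hw.
move=> _; exact: partB emb Cf Cg Kgx hxk Klam stat neg hw.
Qed.
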